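(* Let $A\in B_\infty(L)$, let $\{e_j\}_{j\in\mathbb N}$ be a complete orthonormal system in $L$, and $\Delta_M(A):=\sum_{j=1}^M a(Ae_j)a(\bar e_j)$. Then for every $\Phi\in\mathcal F_0$ the limit $\Delta(A)\Phi:=\lim_{M\to\infty}\Delta_M(A)\Phi$ exists, and for $n\in\mathbb N_0$, $g_1,\dots,g_n\in L$, \[ \Delta(A)\,a^\dagger(g_n)\cdots a^\dagger(g_1)\Omega=\sum_{\substack{k,l=1\\k\neq l}}^n(\bar g_l,Ag_k)\Big(\prod_{m\in\{1,\dots,n\}\setminus\{k,l\}}a^\dagger(g_m)\Big)\Omega , \] where the product is over the creation operators $a^\dagger(g_m)$, $m\ne k,l$ (which commute, so the order is irrelevant), and the sum is zero for $n<2$.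
   Context: $L$ is a separable complex Hilbert space with $\dim L=\infty$, scalar product antilinear in the first argument, and a conjugation $f\mapsto\bar f$ (antilinear involution with $(\bar f,\bar g)=(g,f)$). $B_\infty(L)$ denotes the bounded operators on $L$. $\mathcal F$ carries a Fock representation of the CCR over $L$: on a dense invariant domain $D$ there are operators $a(f),a^\dagger(f)$, linear in $f$, with $[a(f),a(g)]=0=[a^\dagger(f),a^\dagger(g)]$, $[a(f),a^\dagger(g)]=(\bar f,g)\mathrm{id}$, $(a(f)\Phi,\Psi)=(\Phi,a^\dagger(\bar f)\Psi)$, a unit vacuum $\Omega$ with $a(f)\Omega=0$, and $\mathcal F$ is the closure of $\mathcal F_0:=\operatorname{span}\{a^\dagger(f_n)\cdots a^\dagger(f_1)\Omega: n\in\mathbb N_0, f_i\in L\}$. *)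

(* Defs.v *)
From HB Require Import structures.
From mathcomp Require Import all_boot all_order all_algebra.
From mathcomp Require Import complex.
From mathcomp Require Import boolp classical_sets reals.
Set Implicit Arguments. Unset Strict Implicit. Unset Printing Implicit Defensive.
Import Order.TTheory GRing.Theory Num.Theory.
Local Open Scope ring_scope.

Section Defs.
Variable R : realType.
Local Notation C := (R[i]).

(* An inner product, antilinear in the first argument, linear in the second. *)
Definition inner_product (V : lmodType C) (ip : V -> V -> C) : Prop :=
  [/\ (forall x y z (c : C), ip x (c *: y + z) = c * ip x y + ip x z),
      (forall x y, ip y x = (ip x y)^*),
      (forall x, 0 <= ip x x) &
      (forall x, ip x x = 0 -> x = 0)].

Definition ipnorm (V : lmodType C) (ip : V -> V -> C) (x : V) : C :=
  sqrtC (ip x x).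

Definition ip_cvg (V : lmodType C) (ip : V -> V -> C) (u : nat -> V) (l : V) : Prop :=
  forall eps : C, 0 < eps ->
    exists N : nat, forall M : nat, (N <= M)%N -> ipnorm ip (u M - l) < eps.

Definition ip_complete (V : lmodType C) (ip : V -> V -> C) : Prop :=
  forall u : nat -> V,
    (forall eps : C, 0 < eps -> exists N : nat, forall m n : nat,
        (N <= m)%N -> (N <= n)%N -> ipnorm ip (u m - u n) < eps) ->
    exists l : V, ip_cvg ip u l.

Definition hilbert (V : lmodType C) (ip : V -> V -> C) : Prop :=
  inner_product ip /\ ip_complete ip.

Definition conjugation (V : lmodType C) (ip : V -> V -> C) (cj : V -> V) : Prop :=
  [/\ (forall (c : C) x y, cj (c *: x + y) = c^* *: cj x + cj y),
      (forall x, cj (cj x) = x) &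
      (forall x y, ip (cj x) (cj y) = ip y x)].

Definition bounded_op (V : lmodType C) (ip : V -> V -> C) (A : V -> V) : Prop :=
  (forall (c : C) x y, A (c *: x + y) = c *: A x + A y) /\
  (exists K : C, 0 <= K /\ forall x, ipnorm ip (A x) <= K * ipnorm ip x).

Definition complete_ONS (V : lmodType C) (ip : V -> V -> C) (e : nat -> V) : Prop :=
  (forall i j : nat, ip (e i) (e j) = (i == j)%:R) /\
  (forall (f : V) (eps : C), 0 < eps ->
     exists (N : nat) (c : nat -> C),
       ipnorm ip (f - \sum_(j < N) c j *: e j) < eps).

(* a^dagger(g_{n-1}) ... a^dagger(g_0) Omega  (the paper's g_1..g_n are g 0 .. g (n-1)) *)
Fixpoint creat (L F : Type) (ad : L -> F -> F) (Om : F) (g : nat -> L) (n : nat) : F :=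
  match n with
  | 0 => Om
  | m.+1 => ad (g m) (creat ad Om g m)
  end.

Fixpoint creat_except (L F : Type) (ad : L -> F -> F) (Om : F) (g : nat -> L)
    (k l : nat) (n : nat) : F :=
  match n with
  | 0 => Om
  | m.+1 => if (m == k) || (m == l) then creat_except ad Om g k l m
            else ad (g m) (creat_except ad Om g k l m)
  end.

Definition inF0 (L F : lmodType C) (ad : L -> F -> F) (Om : F) (Phi : F) : Prop :=
  exists (p : nat) (c : 'I_p -> C) (ns : 'I_p -> nat) (gs : 'I_p -> nat -> L),
    Phi = \sum_(i < p) c i *: creat ad Om (gs i) (ns i).

Definition fock_rep (L F : lmodType C) (ipL : L -> L -> C) (cj : L -> L)
    (ipF : F -> F -> C) (a ad : L -> F -> F) (D : set F) (Om : F) : Prop :=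
  [/\
      [/\ D 0, (forall (c : C) x y, D x -> D y -> D (c *: x + y)),
          (forall f x, D x -> D (a f x)), (forall f x, D x -> D (ad f x)) &
          (forall x (eps : C), 0 < eps -> exists y, D y /\ ipnorm ipF (x - y) < eps)],
      [/\ (forall f (c : C) x y, D x -> D y -> a f (c *: x + y) = c *: a f x + a f y),
          (forall f (c : C) x y, D x -> D y -> ad f (c *: x + y) = c *: ad f x + ad f y),
          (forall (c : C) f g x, D x -> a (c *: f + g) x = c *: a f x + a g x) &
          (forall (c : C) f g x, D x -> ad (c *: f + g) x = c *: ad f x + ad g x)],
      [/\ (forall f g x, D x -> a f (a g x) = a g (a f x)),
          (forall f g x, D x -> ad f (ad g x) = ad g (ad f x)) &
          (forall f g x, D x -> a f (ad g x) - ad g (a f x) = ipL (cj f) g *: x)],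
      (forall f x y, D x -> D y -> ipF (a f x) y = ipF x (ad (cj f) y)) &
      [/\ D Om, ipF Om Om = 1 & (forall f, a f Om = 0)]] /\
      (forall x (eps : C), 0 < eps ->
         exists y, inF0 ad Om y /\ ipnorm ipF (x - y) < eps).

(* Delta_M(A) = sum_{j=1}^M a(A e_j) a(conj e_j)  (indices shifted to 0..M-1) *)
Definition DeltaM (L F : lmodType C) (cj : L -> L) (a : L -> F -> F)
    (A : L -> L) (e : nat -> L) (M : nat) (Phi : F) : F :=
  \sum_(j < M) a (A (e j)) (a (cj (e j)) Phi).

End Defs.

(* Main.v *)
Require Import Defs.
From HB Require Import structures.
From mathcomp Require Import all_boot all_order all_algebra.
From mathcomp Require Import complex.
From mathcomp Require Import boolp classical_sets reals.
From mathcomp Require Import ring.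
Import Order.TTheory GRing.Theory Num.Theory.
Local Open Scope ring_scope.

Section H.
Variable R : realType.
Local Notation C := (R[i]).
Variable V : lmodType C.
Variable ip : V -> V -> C.
Hypothesis hip : inner_product ip.

Lemma ipDr x y z : ip x (y + z) = ip x y + ip x z.
Proof. case: hip => h _ _ _. by have := h x y z 1; rewrite scale1r mul1r. Qed.
Lemma ip0r x : ip x 0 = 0.
Proof. have := ipDr x 0 0; rewrite addr0 -{1}[ip x 0]addr0 => /addrI H. by rewrite -H. Qed.
Lemma ipZr x c y : ip x (c *: y) = c * ip x y.
Proof. case: hip => h _ _ _. by have := h x y 0 c; rewrite addr0 ip0r addr0. Qed.
Lemma ipNr x y : ip x (- y) = - ip x y.
Proof. by rewrite -scaleN1r ipZr mulN1r. Qed.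
Lemma ipBr x y z : ip x (y - z) = ip x y - ip x z.
Proof. by rewrite ipDr ipNr. Qed.
Lemma ipC x y : ip y x = (ip x y)^*.
Proof. by case: hip. Qed.
Lemma ipDl x y z : ip (y + z) x = ip y x + ip z x.
Proof. by rewrite ipC ipDr rmorphD [ip y x]ipC [ip z x]ipC. Qed.
Lemma ipZl x c y : ip (c *: y) x = c^* * ip y x.
Proof. by rewrite ipC ipZr rmorphM [ip y x]ipC. Qed.
Lemma ipNl x y : ip (- y) x = - ip y x.
Proof. by rewrite ipC ipNr rmorphN [ip y x]ipC. Qed.
Lemma ipBl x y z : ip (y - z) x = ip y x - ip z x.
Proof. by rewrite ipDl ipNl. Qed.
Lemma ip0l x : ip 0 x = 0.
Proof. by rewrite ipC ip0r conjC0. Qed.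
Lemma ip_ge0 x : 0 <= ip x x.
Proof. by case: hip. Qed.
Lemma ip_eq0 x : ip x x = 0 -> x = 0.
Proof. by case: hip => _ _ _; apply. Qed.
Lemma ip_conj x : (ip x x)^* = ip x x.
Proof. have h := ip_ge0 x. have h2 := ger0_real h. exact: (conj_Creal h2). Qed.
Lemma ip_sumr x I (r : seq I) (P : pred I) (f : I -> V) :
  ip x (\sum_(i <- r | P i) f i) = \sum_(i <- r | P i) ip x (f i).
Proof. exact: (big_morph (ip x) (ipDr x) (ip0r x)). Qed.

Lemma ip_tri2 x y : ip (x + y) (x + y) <= 2 * (ip x x + ip y y).
Proof.
have E : ip (x + y) (x + y) = 2 * (ip x x + ip y y) - ip (x - y) (x - y).
  rewrite !(ipDl, ipDr, ipNl, ipNr); ring.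
by rewrite E gerBl ip_ge0.
Qed.

Lemma ipZZ c x : ip (c *: x) (c *: x) = `|c| ^+ 2 * ip x x.
Proof. by rewrite ipZl ipZr mulrA normCKC. Qed.

Lemma CS x y : `|ip x y| ^+ 2 <= ip x x * ip y y.
Proof.
have [y0|yn0] := eqVneq y 0.
  by rewrite y0 ip0r normr0 expr0n /= ip0r mulr0.
have yy0 : ip y y != 0 by apply: contra_neq yn0; apply: ip_eq0.
have yyp : 0 < ip y y by rewrite lt_def yy0 ip_ge0.
set t := ip y x / ip y y.
have := ip_ge0 (x - t *: y).
rewrite !ipBl !ipBr !ipZl !ipZr.
have tc : t^* = ip x y / ip y y.
  by rewrite /t [in RHS]ipC -[in RHS](ip_conj y) -fmorph_div.
rewrite tc /t normCKC -ipC.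
have -> : ip x x - ip y x / ip y y * ip x y -
  (ip x y / ip y y * ip y x - ip x y / ip y y * (ip y x / ip y y * ip y y))
   = (ip x x * ip y y - ip y x * ip x y) / ip y y by field.
by rewrite pmulr_lge0 ?invr_gt0 // subr_ge0.
Qed.

Lemma ip_suml x I (r : seq I) (P : pred I) (f : I -> V) :
  ip (\sum_(i <- r | P i) f i) x = \sum_(i <- r | P i) ip (f i) x.
Proof. exact: (big_morph (ip^~ x) (fun y z => ipDl x y z) (ip0l x)). Qed.

Definition van (u : nat -> V) := forall eps : C, 0 < eps ->
  exists N, forall M, (N <= M)%N -> ip (u M) (u M) < eps.
Definition svan (c : nat -> C) := forall eps : C, 0 < eps ->
  exists N, forall M, (N <= M)%N -> `|c M| ^+ 2 < eps.

Lemma van0 : van (fun _ => 0).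
Proof. by move=> eps he; exists 0%N => M _; rewrite ip0r. Qed.

Lemma vanD u v : van u -> van v -> van (fun M => u M + v M).
Proof.
move=> hu hv eps he.
have e4 : 0 < eps / 4 by rewrite divr_gt0 // ltr0n.
have [N1 h1] := hu _ e4; have [N2 h2] := hv _ e4.
exists (maxn N1 N2) => M hM.
apply: le_lt_trans (ip_tri2 _ _) _.
have -> : eps = 2 * (eps / 4 + eps / 4) by field.
rewrite ltr_pM2l ?ltr0n //; apply: ltrD.
  by apply: h1; apply: leq_trans hM; apply: leq_maxl.
by apply: h2; apply: leq_trans hM; apply: leq_maxr.
Qed.

Lemma van_sum I (r : seq I) (P : pred I) (f : I -> nat -> V) :
  (forall i, P i -> van (f i)) -> van (fun M => \sum_(i <- r | P i) f i M).
Proof.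
move=> hf; elim: r => [|i r IH].
  by under [fun M => _]funext => M do rewrite big_nil; exact: van0.
under [fun M => _]funext => M do rewrite big_cons.
case: (boolP (P i)) => hP.
  by apply: vanD => //; apply: hf.
exact: IH.
Qed.

Lemma helper (x K eps : C) : 0 <= x -> 0 <= K -> x < eps / (K + 1) -> x * K < eps.
Proof.
move=> hx hK h.
have K1 : 0 < K + 1 by rewrite ltr_wpDl.
apply: le_lt_trans (_ : x * (K + 1) < eps).
  by rewrite ler_wpM2l // lerDl.
by rewrite -ltr_pdivlMr.
Qed.

Lemma vanZs (c : nat -> C) x : svan c -> van (fun M => c M *: x).
Proof.
move=> hc eps he.
have h1 : 0 < eps / (ip x x + 1) by rewrite divr_gt0 // ltr_wpDl // ip_ge0.
have [N hN] := hc _ h1; exists N => M hM; rewrite ipZZ.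
by apply: helper; rewrite ?ip_ge0 ?exprn_ge0 // ?hN.
Qed.

Lemma vanZc (c : C) u : van u -> van (fun M => c *: u M).
Proof.
move=> hu eps he.
have h1 : 0 < eps / (`|c| ^+ 2 + 1) by rewrite divr_gt0 // ltr_wpDl // exprn_ge0.
have [N hN] := hu _ h1; exists N => M hM; rewrite ipZZ mulrC.
by apply: helper; rewrite ?ip_ge0 ?exprn_ge0 // ?hN.
Qed.

Lemma van_cvg u l : van (fun M => u M - l) -> ip_cvg ip u l.
Proof.
move=> hu eps he.
have [N hN] := hu _ (exprn_gt0 2 he); exists N => M hM.
rewrite /ipnorm -(sqrCK (ltW he)) ltr_sqrtC ?nnegrE ?ip_ge0 ?exprn_ge0 ?ltW //.
exact: hN.
Qed.

Lemma sq_le (x b : C) : 0 <= x -> 0 <= b -> sqrtC x <= b -> x <= b ^+ 2.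
Proof.
move=> hx hb h; rewrite -(sqrtCK x) ler_pXn2r ?nnegrE ?sqrtC_ge0 //.
Qed.
Lemma sq_lt (x b : C) : 0 <= x -> 0 <= b -> sqrtC x < b -> x < b ^+ 2.
Proof.
move=> hx hb h; rewrite -(sqrtCK x) ltr_pXn2r ?nnegrE ?sqrtC_ge0 //.
Qed.


Section Fourier.
Variable e : nat -> V.
Hypothesis eON : forall i j : nat, ip (e i) (e j) = (i == j)%:R.
Definition Pr M g := \sum_(j < M) ip (e j) g *: e j.

Lemma ipeP i M g : (i < M)%N -> ip (e i) (Pr M g) = ip (e i) g.
Proof.
move=> hi; rewrite /Pr ip_sumr (bigD1 (Ordinal hi)) //= ipZr eON eqxx mulr1 big1 ?addr0 //.
move=> j hj; rewrite ipZr eON; case: eqP => [hij|]; last by rewrite mulr0.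
by case/eqP: hj; apply: val_inj => /=; rewrite hij.
Qed.

Lemma ipe_res i M g : (i < M)%N -> ip (e i) (g - Pr M g) = 0.
Proof. by move=> hi; rewrite ipBr ipeP // subrr. Qed.

Lemma best M N (c : nat -> C) g : (N <= M)%N ->
  ip (g - Pr M g) (g - Pr M g) <=
  ip (g - \sum_(j < N) c j *: e j) (g - \sum_(j < N) c j *: e j).
Proof.
move=> hNM; set w := g - Pr M g; set h := \sum_(j < N) c j *: e j.
have -> : g - h = w + (Pr M g - h) by rewrite /w addrA subrK.
have hs : ip (Pr M g - h) w = 0.
  rewrite ipBl /Pr /h !ip_suml !big1 ?subr0 // => j _; rewrite ipZl /w ipe_res ?mulr0 //.
    exact: leq_trans (ltn_ord j) hNM.
have hs' : ip w (Pr M g - h) = 0 by rewrite ipC hs conjC0.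
move: hs hs'; set s := Pr M g - h => hs hs'.
clearbody s w.
rewrite ipDl !ipDr hs hs' addr0 add0r lerDl ip_ge0 //.
Qed.

Lemma fourier g :
  (forall (f : V) (eps : C), 0 < eps ->
     exists (N : nat) (c : nat -> C),
       ipnorm ip (f - \sum_(j < N) c j *: e j) < eps) ->
  van (fun M => g - Pr M g).
Proof.
move=> hc eps he.
have hse : 0 < sqrtC eps by rewrite sqrtC_gt0.
have [N [c hN]] := hc g (sqrtC eps) hse.
exists N => M hM; apply: le_lt_trans (best _ _ c g hM) _.
rewrite -[eps]sqrtCK; apply: sq_lt; rewrite ?ip_ge0 ?sqrtC_ge0 ?ltW //.
Qed.
End Fourier.

End H.
Arguments ipDr {R V ip}. Arguments ipZr {R V ip}. Arguments ipNr {R V ip}.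
Arguments ipBr {R V ip}. Arguments ipC {R V ip}. Arguments ipDl {R V ip}.
Arguments ipZl {R V ip}. Arguments ip_ge0 {R V ip}. Arguments ip_sumr {R V ip}.
Arguments ipZZ {R V ip}. Arguments CS {R V ip}. Arguments vanZs {R V ip}.
Arguments vanZc {R V ip}. Arguments van_sum {R V ip}. Arguments van_cvg {R V ip}.
Arguments fourier {R V ip}. Arguments Pr {R V}. Arguments van {R V}.
Arguments svan {R}. Arguments helper {R}. Arguments sq_le {R}. Arguments sq_lt {R}.


Section Lin.
Variable R : realType.
Local Notation C := (R[i]).
Variables (U W : lmodType C) (D : set U) (T : U -> W).
Hypothesis D0 : D 0.
Hypothesis DL : forall (c : C) x y, D x -> D y -> D (c *: x + y).
Hypothesis hT : forall (c : C) x y, D x -> D y -> T (c *: x + y) = c *: T x + T y.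

Lemma DD x y : D x -> D y -> D (x + y).
Proof. by move=> hx hy; have := DL 1 _ _ hx hy; rewrite scale1r. Qed.
Lemma DZ (c : C) x : D x -> D (c *: x).
Proof. by move=> hx; have := DL c _ _ hx D0; rewrite addr0. Qed.
Lemma Dsum I (r : seq I) (P : pred I) (f : I -> U) :
  (forall i, P i -> D (f i)) -> D (\sum_(i <- r | P i) f i).
Proof.
move=> hf; elim: r => [|i r IH]; first by rewrite big_nil.
rewrite big_cons; case: ifP => hP //; apply: DD => //; exact: hf.
Qed.
Lemma T0 : T 0 = 0.
Proof.
have := @hT 1 0 0 D0 D0; rewrite !scale1r addr0 -{1}[T 0]addr0 => /addrI H.
by rewrite -H.
Qed.
Lemma TD x y : D x -> D y -> T (x + y) = T x + T y.
Proof. by move=> hx hy; have := hT 1 _ _ hx hy; rewrite !scale1r. Qed.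
Lemma TZ (c : C) x : D x -> T (c *: x) = c *: T x.
Proof. by move=> hx; have := hT c _ _ hx D0; rewrite !addr0 T0 addr0. Qed.
Lemma TB x y : D x -> D y -> T (x - y) = T x - T y.
Proof. by move=> hx hy; have := hT (-1) _ _ hy hx; rewrite !scaleN1r addrC [_ + T x]addrC. Qed.
Lemma Tsum I (r : seq I) (P : pred I) (f : I -> U) :
  (forall i, P i -> D (f i)) -> T (\sum_(i <- r | P i) f i) = \sum_(i <- r | P i) T (f i).
Proof.
move=> hf; elim: r => [|i r IH]; first by rewrite !big_nil T0.
rewrite !big_cons; case: ifP => hP //; rewrite TD ?IH //; first exact: hf.
exact: Dsum.
Qed.
End Lin.
Arguments DD {R U D}. Arguments DZ {R U D}. Arguments Dsum {R U D}.
Arguments T0 {R U W D T}. Arguments TD {R U W D T}. Arguments TZ {R U W D T}.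
Arguments TB {R U W D T}. Arguments Tsum {R U W D T}.

Section Fock.
Variable R : realType.
Local Notation C := (R[i]).
Variables (L F : lmodType C) (ipL : L -> L -> C) (cj : L -> L)
  (a ad : L -> F -> F) (D : set F) (Om : F).
Hypothesis D0 : D 0.
Hypothesis DL : forall (c : C) x y, D x -> D y -> D (c *: x + y).
Hypothesis Da : forall f x, D x -> D (a f x).
Hypothesis Dad : forall f x, D x -> D (ad f x).
Hypothesis aL : forall f (c : C) x y, D x -> D y -> a f (c *: x + y) = c *: a f x + a f y.
Hypothesis adL : forall f (c : C) x y, D x -> D y -> ad f (c *: x + y) = c *: ad f x + ad f y.
Hypothesis ccr : forall f g x, D x -> a f (ad g x) - ad g (a f x) = ipL (cj f) g *: x.
Hypothesis DOm : D Om.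
Hypothesis aOm : forall f, a f Om = 0.

Local Notation cr := (creat ad Om).
Local Notation ce := (creat_except ad Om).

Lemma Dcr g n : D (cr g n).
Proof. by elim: n => //= n IH; apply: Dad. Qed.
Lemma Dce g k l n : D (ce g k l n).
Proof. by elim: n => //= n IH; case: ifP => _ //; apply: Dad. Qed.
Lemma ce_sym g k l n : ce g k l n = ce g l k n.
Proof. by elim: n => //= n IH; rewrite orbC IH. Qed.
Lemma ce_big g k l n : (n <= k)%N -> ce g k l n = ce g l l n.
Proof.
elim: n => //= n IH h.
have -> : (n == k) = false by apply/negbTE; rewrite neq_ltn h.
by rewrite orbb IH // ltnW.
Qed.
Lemma ce_cr g l n : (n <= l)%N -> ce g l l n = cr g n.
Proof.
elim: n => //= n IH h.
have -> : (n == l) = false by apply/negbTE; rewrite neq_ltn h.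
by rewrite IH // ltnW.
Qed.

Lemma a_ad f g x : D x -> a f (ad g x) = ad g (a f x) + ipL (cj f) g *: x.
Proof. by move=> hx; rewrite -ccr // addrC subrK. Qed.

Lemma A2 f g l n : a f (ce g l l n) =
  \sum_(k < n | (k : nat) != l) ipL (cj f) (g k) *: ce g k l n.
Proof.
elim: n => [|n IH]; first by rewrite big_ord0 /= aOm.
rewrite big_mkcond big_ord_recr /=.
have hw : forall k : 'I_n, (n == k) = false.
  by move=> k; apply/negbTE; rewrite eq_sym neq_ltn ltn_ord.
case: eqP => [hnl|/eqP hnl].
  subst l; rewrite eqxx /= addr0 IH big_mkcond; apply: eq_bigr => k _.
  by rewrite orbT.
rewrite eqxx /= a_ad; last exact: Dce.
rewrite IH (ce_big g n l n (leqnn n)).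
rewrite big_mkcond (Tsum D0 DL (adL (g n)) _ (index_enum 'I_n) xpredT); last first.
  by move=> k _; case: ifP => _ //; apply: (DZ D0 DL); apply: Dce.
congr (_ + _); apply: eq_bigr => k _.
rewrite hw /=; case: ifP => _; last exact: (T0 D0 (adL (g n))).
by rewrite (TZ D0 (adL (g n))) //; apply: Dce.
Qed.

Lemma A1 f g n : a f (cr g n) = \sum_(k < n) ipL (cj f) (g k) *: ce g k k n.
Proof.
rewrite -(ce_cr g n n (leqnn n)) A2 big_mkcond; apply: eq_bigr => k _.
by rewrite neq_ltn ltn_ord /= ce_sym (ce_big g n k n (leqnn n)).
Qed.

Variables (A : L -> L) (e : nat -> L).
Hypothesis hipL : inner_product ipL.
Hypothesis cjK : forall x, cj (cj x) = x.
Hypothesis cjip : forall x y, ipL (cj x) (cj y) = ipL y x.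
Hypothesis Alin : forall (c : C) x y, A (c *: x + y) = c *: A x + A y.

Let DT : set L := fun _ => True.
Let Alin' : forall (c : C) x y, DT x -> DT y -> A (c *: x + y) = c *: A x + A y.
Proof. by move=> c x y _ _; apply: Alin. Qed.
Let DT0 : DT 0. Proof. by []. Qed.
Let DTL : forall (c : C) x y, DT x -> DT y -> DT (c *: x + y).
Proof. by []. Qed.

Lemma cjsw x y : ipL (cj x) y = ipL (cj y) x.
Proof. by rewrite -{1}(cjK y) cjip. Qed.

Lemma coefE M (k l : nat) (g : nat -> L) :
  \sum_(j < M) ipL (e j) (g k) * ipL (cj (A (e j))) (g l) =
  ipL (cj (g l)) (A (Pr ipL e M (g k))).
Proof.
rewrite /Pr (Tsum DT0 DTL Alin') // (ip_sumr hipL); apply: eq_bigr => j _.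
by rewrite (TZ DT0 Alin') // (ipZr hipL) cjsw.
Qed.

Lemma DeltaE M g n : DeltaM cj a A e M (cr g n) =
  \sum_(k < n) \sum_(l < n | l != k)
     ipL (cj (g l)) (A (Pr ipL e M (g k))) *: ce g k l n.
Proof.
rewrite /DeltaM.
transitivity (\sum_(j < M) \sum_(k < n) \sum_(l < n | l != k)
   (ipL (e j) (g k) * ipL (cj (A (e j))) (g l)) *: ce g k l n).
  apply: eq_bigr => j _.
  rewrite A1 cjK (Tsum D0 DL (aL (A (e j)))); last first.
    by move=> k _; apply: (DZ D0 DL); apply: Dce.
  apply: eq_bigr => k _; rewrite (TZ D0 (aL (A (e j)))); last exact: Dce.
  rewrite A2 scaler_sumr; apply: eq_big => [l|l _] //.
  by rewrite scalerA ce_sym.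
rewrite exchange_big; apply: eq_bigr => k _.
rewrite exchange_big; apply: eq_bigr => l _.
by rewrite -scaler_suml coefE.
Qed.

Variable ipF : F -> F -> C.
Hypothesis hipF : inner_product ipF.
Hypothesis eON : forall i j : nat, ipL (e i) (e j) = (i == j)%:R.
Hypothesis ecomp : forall (f : L) (eps : C), 0 < eps ->
     exists (N : nat) (c : nat -> C),
       ipnorm ipL (f - \sum_(j < N) c j *: e j) < eps.
Variable K : C.
Hypothesis hK0 : 0 <= K.
Hypothesis hK : forall x, ipnorm ipL (A x) <= K * ipnorm ipL x.

Lemma Abnd x : ipL (A x) (A x) <= K ^+ 2 * ipL x x.
Proof.
rewrite -[X in _ * X](sqrtCK (ipL x x)) -exprMn.
apply: sq_le; rewrite ?(ip_ge0 hipL) ?mulr_ge0 ?sqrtC_ge0 ?(ip_ge0 hipL) //.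
exact: hK.
Qed.

Lemma coef_svan (k l : nat) (g : nat -> L) :
  svan (fun M => ipL (cj (g l)) (A (Pr ipL e M (g k))) - ipL (cj (g l)) (A (g k))).
Proof.
move=> eps he; set u := cj (g l).
have hb : 0 <= ipL u u * K ^+ 2 by rewrite mulr_ge0 ?exprn_ge0 ?(ip_ge0 hipL).
have h1 : 0 < eps / (ipL u u * K ^+ 2 + 1) by rewrite divr_gt0 // ltr_wpDl.
have [N hN] := fourier hipL e eON (g k) ecomp _ h1.
exists N => M hM.
set w := g k - Pr ipL e M (g k).
have -> : ipL u (A (Pr ipL e M (g k))) - ipL u (A (g k)) = - ipL u (A w).
  rewrite -(ipBr hipL) -(TB Alin') //.
  have := Alin (-1) w 0; rewrite !scaleN1r addr0 (T0 DT0 Alin') addr0 => Aneg.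
  by rewrite (_ : Pr ipL e M (g k) - g k = - w) ?Aneg ?(ipNr hipL) // /w opprB.
rewrite normrN; apply: le_lt_trans (CS hipL _ _) _.
apply: le_lt_trans (_ : ipL u u * (K ^+ 2 * ipL w w) < eps).
  by rewrite ler_wpM2l ?(ip_ge0 hipL) // Abnd.
rewrite mulrA mulrC; apply: helper; rewrite ?(ip_ge0 hipL) //.
exact: hN.
Qed.

Definition target (g : nat -> L) n :=
  \sum_(k < n) \sum_(l < n | l != k)
          ipL (cj (g l)) (A (g k)) *: ce g k l n.

Lemma part2 (n : nat) (g : nat -> L) :
  van ipF (fun M => DeltaM cj a A e M (cr g n) - target g n).
Proof.
have E : forall M, DeltaM cj a A e M (cr g n) - target g n =
  \sum_(k < n) \sum_(l < n | l != k)
    (ipL (cj (g l)) (A (Pr ipL e M (g k))) - ipL (cj (g l)) (A (g k))) *: ce g k l n.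
  move=> M; rewrite DeltaE /target -sumrB; apply: eq_bigr => k _.
  by rewrite -sumrB; apply: eq_bigr => l _; rewrite scalerBl.
suff hv : van ipF (fun M => \sum_(k < n) \sum_(l < n | l != k)
    (ipL (cj (g l)) (A (Pr ipL e M (g k))) - ipL (cj (g l)) (A (g k))) *: ce g k l n).
  by move=> eps he; have [N hN] := hv eps he; exists N => M hM; rewrite E; exact: hN.
apply: (van_sum hipF) => k _; apply: (van_sum hipF) => l _.
apply: (vanZs hipF); exact: coef_svan.
Qed.

Lemma DeltaM_lin M p (c : 'I_p -> C) (x : 'I_p -> F) : (forall i, D (x i)) ->
  DeltaM cj a A e M (\sum_(i < p) c i *: x i) = \sum_(i < p) c i *: DeltaM cj a A e M (x i).
Proof.
move=> hx; rewrite /DeltaM.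
transitivity (\sum_(j < M) \sum_(i < p) c i *: a (A (e j)) (a (cj (e j)) (x i))).
  apply: eq_bigr => j _.
  rewrite (Tsum D0 DL (aL (cj (e j)))); last by move=> i _; apply: (DZ D0 DL).
  rewrite (Tsum D0 DL (aL (A (e j)))); last first.
    by move=> i _; rewrite (TZ D0 (aL (cj (e j)))) //; apply: (DZ D0 DL); apply: Da.
  apply: eq_bigr => i _; rewrite (TZ D0 (aL (cj (e j)))) //.
  by rewrite (TZ D0 (aL (A (e j)))) //; apply: Da.
by rewrite exchange_big; apply: eq_bigr => i _; rewrite scaler_sumr.
Qed.

Lemma part1 p (c : 'I_p -> C) (ns : 'I_p -> nat) (gs : 'I_p -> nat -> L) :
  ip_cvg ipF (fun M => DeltaM cj a A e M (\sum_(i < p) c i *: cr (gs i) (ns i)))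
    (\sum_(i < p) c i *: target (gs i) (ns i)).
Proof.
apply: (van_cvg hipF).
have E : forall M, DeltaM cj a A e M (\sum_(i < p) c i *: cr (gs i) (ns i)) -
   \sum_(i < p) c i *: target (gs i) (ns i) =
   \sum_(i < p) c i *: (DeltaM cj a A e M (cr (gs i) (ns i)) - target (gs i) (ns i)).
  move=> M; rewrite DeltaM_lin; last by move=> i; apply: Dcr.
  by rewrite -sumrB; apply: eq_bigr => i _; rewrite scalerBr.
suff hv : van ipF (fun M => \sum_(i < p) c i *: (DeltaM cj a A e M (cr (gs i) (ns i)) - target (gs i) (ns i))).
  by move=> eps he; have [N hN] := hv eps he; exists N => M hM; rewrite E; exact: hN.
apply: (van_sum hipF) => i _; apply: (vanZc hipF); exact: part2.
Qed.

End Fock.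

Theorem lemma5p5 (R : realType) (L F : lmodType R[i])
    (ipL : L -> L -> R[i]) (cj : L -> L)
    (ipF : F -> F -> R[i]) (a ad : L -> F -> F) (D : set F) (Om : F)
    (A : L -> L) (e : nat -> L) :
  hilbert ipL -> conjugation ipL cj ->
  hilbert ipF -> fock_rep ipL cj ipF a ad D Om ->
  bounded_op ipL A -> complete_ONS ipL e ->
  (forall Phi : F, inF0 ad Om Phi ->
     exists Psi : F, ip_cvg ipF (fun M => DeltaM cj a A e M Phi) Psi) /\
  (forall (n : nat) (g : nat -> L),
     ip_cvg ipF (fun M => DeltaM cj a A e M (creat ad Om g n))
       (\sum_(k < n) \sum_(l < n | l != k)
          ipL (cj (g l)) (A (g k)) *: creat_except ad Om g k l n)).
Proof.
move=> [hipL _] [_ cjK cjip] [hipF _].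
move=> [[[D0 DL Da Dad _] [aL adL _ _] [_ _ ccr] _ [DOm _ aOm]] _].
move=> [Alin [K [hK0 hK]]] [eON ecomp].
split.
  move=> Phi [p [c [ns [gs ->]]]].
  eexists; exact: (part1 R L F ipL cj a ad D Om D0 DL Da Dad aL adL ccr DOm aOm A e
    hipL cjK cjip Alin ipF hipF eON ecomp K hK0 hK p c ns gs).
move=> n g; apply: (van_cvg hipF).
exact: (part2 R L F ipL cj a ad D Om D0 DL Dad aL adL ccr DOm aOm A e
    hipL cjK cjip Alin ipF hipF eON ecomp K hK0 hK n g).
Qed.
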